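(* In the abruptly-changing incentivized bandit with reward drift where the principal uses Discounted UCB (as in the context), for all arms $a\in\{1,\dots,K\}$ and all $t\in\{1,\dots,T\}$, $$D_t(\gamma,a)\le 2l\,N_t(a)\sqrt{\xi\log(n_t(\gamma))}.$$
   Context: Arms $\{1,\dots,K\}$, horizon $T$; true rewards $X_t(a)\in[0,1]$ independent with means $\mu_t(a)$. Protocol: the principal recommends $a_t$ by Discounted UCB; greedy choice $g_t=\arg\max_a\bar X_t(\gamma,a)$; if $a_t\ne g_t$ the principal pays $\chi_t=\bar X_t(\gamma,g_t)-\bar X_t(\gamma,a_t)$ and the observed reward is $r_t=X_t(a_t)+\delta_t$, $\delta_t=f_t(\chi_t)$; otherwise $\delta_t=0$ and $r_t=X_t(a_t)$. Each $f_t$ is non-decreasing, $f_t(0)=0$, Lipschitz with constant $l_t$; $l=\max_tl_t$. Discounted UCB ($\gamma\in(0,1)$, constant $\xi$): $N_t(\gamma,a)=\sum_{s\le t}\gamma^{t-s}\mathbf 1(a_s=a)$, $n_t(\gamma)=\sum_aN_t(\gamma,a)$, $\bar X_t(\gamma,a)=\frac1{N_t(\gamma,a)}\sum_{s\le t}\gamma^{t-s}\mathbf1(a_s=a)r_s$, $c_t(\gamma,a)=2\sqrt{\xi\log n_t(\gamma)/N_t(\gamma,a)}$; pull arm $t$ for $t\le K$, then $\arg\max_a\bar X_t(\gamma,a)+c_t(\gamma,a)$. $N_t(a)=\sum_{s\le t}\mathbf 1(a_s=a)$ is the undiscounted number of pulls, and $D_t(\gamma,a)=\sum_{s\le t}\mathbf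 1(a_s=a)\delta_s$ is the total reward drift contributed by arm $a$ up to time $t$. *)

(* Defs.v *)
From HB Require Import structures.
From mathcomp Require Import all_boot all_order all_algebra.
From mathcomp Require Import reals exp.
Set Implicit Arguments. Unset Strict Implicit. Unset Printing Implicit Defensive.
Import Order.TTheory GRing.Theory Num.Theory.
Local Open Scope ring_scope.

Section Bandit.
Variables (R : realType) (K : nat).
(* a : nat -> 'I_K  is the sequence of recommended arms a_1, a_2, ... (index 0 unused);
   r : nat -> R     is the sequence of observed rewards r_1, r_2, ... *)

Definition Ndisc (gamma : R) (a : nat -> 'I_K) (t : nat) (k : 'I_K) : R :=
  \sum_(1 <= s < t.+1) gamma ^+ (t - s) * (a s == k)%:R.

Definition ndisc (gamma : R) (a : nat -> 'I_K) (t : nat) : R :=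
  \sum_(k < K) Ndisc gamma a t k.

Definition Xbar (gamma : R) (a : nat -> 'I_K) (r : nat -> R) (t : nat) (k : 'I_K) : R :=
  (\sum_(1 <= s < t.+1) gamma ^+ (t - s) * (a s == k)%:R * r s) / Ndisc gamma a t k.

Definition cbonus (xi gamma : R) (a : nat -> 'I_K) (t : nat) (k : 'I_K) : R :=
  2 * Num.sqrt (xi * ln (ndisc gamma a t) / Ndisc gamma a t k).

Definition Npulls (a : nat -> 'I_K) (t : nat) (k : 'I_K) : nat :=
  \sum_(1 <= s < t.+1) (a s == k).

Definition Ddrift (a : nat -> 'I_K) (delta : nat -> R) (t : nat) (k : 'I_K) : R :=
  \sum_(1 <= s < t.+1) (a s == k)%:R * delta s.

End Bandit.

(* Main.v *)
Require Import Defs.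
From HB Require Import structures.
From mathcomp Require Import all_boot all_order all_algebra.
From mathcomp Require Import reals exp.
From mathcomp Require Import ring lra.
Import Order.TTheory GRing.Theory Num.Theory.
Local Open Scope ring_scope.

Section Aux.
Variables (R : realType) (K : nat) (gamma : R) (a : nat -> 'I_K).
Hypothesis g0 : 0 <= gamma.

Lemma Ndisc_S t k : Ndisc gamma a t.+1 k = gamma * Ndisc gamma a t k + (a t.+1 == k)%:R.
Proof.
rewrite /Ndisc big_nat_recr //= subnn expr0 mul1r; congr (_ + _).
rewrite big_distrr; apply: eq_big_nat => s /andP[_ hs].
by rewrite subSn // exprS -mulrA.
Qed.

Lemma Ndisc0 k : Ndisc gamma a 0 k = 0.
Proof. by rewrite /Ndisc big_geq. Qed.

Lemma Ndisc_ge0 t k : 0 <= Ndisc gamma a t k.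
Proof. by rewrite /Ndisc; apply: sumr_ge0 => s _; apply: mulr_ge0; rewrite ?exprn_ge0. Qed.

Lemma ndisc_closed t : ndisc gamma a t = \sum_(i < t) gamma ^+ i.
Proof.
elim: t => [|t IH].
  by rewrite /ndisc big_ord0; apply: big1 => k _; rewrite Ndisc0.
rewrite /ndisc.
under eq_bigr => k _ do rewrite Ndisc_S.
rewrite big_split /= -big_distrr /= -/(ndisc gamma a t) IH.
rewrite big_ord_recl expr0 addrC; congr (_ + _).
  rewrite (bigD1 (a t.+1) (P:=xpredT)) //= eqxx big1 ?addr0 // => j /negbTE.
  by rewrite eq_sym => ->.
rewrite big_distrr; apply: eq_bigr => i _; by rewrite exprS.
Qed.

Lemma ndisc_mono s t : (s <= t)%N -> ndisc gamma a s <= ndisc gamma a t.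
Proof.
move=> /subnK <-; elim: (t - s)%N => [|d IH] //.
apply: le_trans IH _; rewrite addSn !ndisc_closed big_ord_recr /=.
by rewrite lerDl exprn_ge0.
Qed.

Lemma ndisc_ge1 t : (1 <= t)%N -> 1 <= ndisc gamma a t.
Proof.
case: t => // t _; rewrite ndisc_closed big_ord_recl expr0 lerDl.
by apply: sumr_ge0 => i _; rewrite exprn_ge0.
Qed.

Lemma Ndisc_self_ge1 t : (1 <= t)%N -> 1 <= Ndisc gamma a t (a t).
Proof.
case: t => // t _; rewrite Ndisc_S eqxx lerDr.
by apply: mulr_ge0 => //; apply: Ndisc_ge0.
Qed.

End Aux.

Lemma bigmax_ge (R : realType) (F : nat -> R) (s0 : seq nat) i :
  i \in s0 -> F i <= \big[Num.max/0]_(j <- s0) F j.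
Proof.
elim: s0 => // x s0 IH; rewrite inE big_cons => /orP[/eqP->|/IH h].
  by rewrite le_max lexx.
by rewrite le_max h orbT.
Qed.

Lemma bigmax_ge0 (R : realType) (F : nat -> R) (s0 : seq nat) :
  0 <= \big[Num.max/0]_(j <- s0) F j.
Proof.
elim: s0 => [|x s0 IH]; first by rewrite big_nil.
by rewrite big_cons le_max IH orbT.
Qed.

Theorem lemma2 (R : realType) (K T : nat) (gamma xi : R)
  (X : nat -> 'I_K -> R) (f : nat -> R -> R) (lt : nat -> R) (l : R)
  (a g : nat -> 'I_K) (r delta : nat -> R) :
  0 < gamma < 1 ->
  (* true rewards in [0,1] *)
  (forall t k, 0 <= X t k <= 1) ->
  (* drift functions: non-decreasing, f_t(0) = 0, Lipschitz with constant l_t *)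
  (forall t x y, x <= y -> f t x <= f t y) ->
  (forall t, f t 0 = 0) ->
  (forall t x y, `|f t x - f t y| <= lt t * `|x - y|) ->
  l = \big[Num.max/0]_(1 <= t < T.+1) lt t ->
  (* Discounted UCB: initialisation pulls arm t at rounds t <= K ... *)
  (forall t, (1 <= t <= T)%N -> (t <= K)%N -> nat_of_ord (a t) = t.-1) ->
  (* ... then the arm maximising Xbar + c *)
  (forall t, (1 <= t <= T)%N -> (K < t)%N -> forall k,
     Xbar gamma a r t k + cbonus xi gamma a t k
       <= Xbar gamma a r t (a t) + cbonus xi gamma a t (a t)) ->
  (* greedy choice *)
  (forall t, (1 <= t <= T)%N -> forall k, Xbar gamma a r t k <= Xbar gamma a r t (g t)) ->
  (* incentives and drift *)
  (forall t, (1 <= t <= T)%N ->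
     delta t = if (K < t)%N && (a t != g t)
               then f t (Xbar gamma a r t (g t) - Xbar gamma a r t (a t)) else 0) ->
  (forall t, (1 <= t <= T)%N -> r t = X t (a t) + delta t) ->
  forall (k : 'I_K) (t : nat), (1 <= t <= T)%N ->
    Ddrift a delta t k
      <= 2 * l * (Npulls a t k)%:R * Num.sqrt (xi * ln (ndisc gamma a t)).
Proof.
move=> /andP[gp g1] _ fmono f0 flip hl _ ucb greedy hdelta _ k t /andP[t1 tT].
have g0 : 0 <= gamma by apply: ltW.
set B := 2 * l * Num.sqrt (xi * ln (ndisc gamma a t)).
have l0 : 0 <= l by rewrite hl; apply: bigmax_ge0.
have B0 : 0 <= B by rewrite /B; apply: mulr_ge0; [apply: mulr_ge0 => //| apply: sqrtr_ge0].
have -> : 2 * l * (Npulls a t k)%:R * Num.sqrt (xi * ln (ndisc gamma a t))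
          = \sum_(1 <= s < t.+1) (a s == k)%:R * B.
  rewrite -big_distrl /= /Npulls natr_sum /B; ring.
rewrite /Ddrift; apply: ler_sum_nat => s /andP[s1 st].
have sT : (1 <= s <= T)%N by rewrite s1 /=; apply: leq_trans tT; rewrite -ltnS.
case: eqP => [eak|_]; last by rewrite !mul0r.
rewrite !mul1r hdelta //.
case: ifP => [/andP[Ks nag]|_]; last by [].
set ca := cbonus xi gamma a s (a s).
have cg0 : 0 <= cbonus xi gamma a s (g s).
  by rewrite /cbonus; apply: mulr_ge0 => //; apply: sqrtr_ge0.
have hu := ucb s sT Ks (g s).
have hg := greedy s sT (a s).
have ca0 : 0 <= ca by rewrite /ca /cbonus; apply: mulr_ge0 => //; apply: sqrtr_ge0.
have hx : Xbar gamma a r s (g s) - Xbar gamma a r s (a s) <= ca.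
  move: hu; rewrite -/ca; lra.
apply: le_trans (fmono _ _ _ hx) _.
have hfl : f s ca <= lt s * ca.
  have := flip s ca 0; rewrite f0 !subr0 (ger0_norm ca0).
  by move=> h; apply: le_trans h; apply: ler_norm.
apply: le_trans hfl _.
have hlt : lt s <= l by rewrite hl; apply: bigmax_ge; rewrite mem_index_iota ltnS.
apply: le_trans (_ : l * ca <= _); first by apply: ler_wpM2r.
rewrite /B /ca /cbonus -mulrA [l * _]mulrCA mulrA; apply: ler_wpM2l; first by apply: mulr_ge0.
have n1 := @ndisc_ge1 R K gamma a g0 s s1.
have nt1 := @ndisc_ge1 R K gamma a g0 t t1.
have N1 := @Ndisc_self_ge1 R K gamma a g0 s s1.
have hln : 0 <= ln (ndisc gamma a s) by apply: ln_ge0.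
have hmono : ln (ndisc gamma a s) <= ln (ndisc gamma a t).
  rewrite ler_ln ?posrE; first by apply: (@ndisc_mono R K gamma a g0); rewrite -ltnS.
    by apply: lt_le_trans n1.
  by apply: lt_le_trans nt1.
set y := xi * ln (ndisc gamma a s).
set N := Ndisc gamma a s (a s).
have Np : 0 < N by apply: lt_le_trans N1.
have [y0|y0] := lerP y 0.
  rewrite ler0_sqrtr ?sqrtr_ge0 //.
  by rewrite mulrA -/y (pmulr_lle0, pmulr_rle0) ?invr_gt0.
apply: ler_wsqrtr; rewrite mulrA -/y.
have xi0 : 0 <= xi.
  rewrite leNgt; apply/negP => xin.
  have : y <= 0 by rewrite /y; apply: mulr_le0_ge0 => //; apply: ltW.
  by rewrite leNgt y0.
apply: le_trans (_ : y <= _).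
  by rewrite ler_pdivrMr // ler_peMr // ltW.
by rewrite /y; apply: ler_wpM2l.
Qed.
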